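(* Let $X$ be a Banach space containing no (isomorphic) copy of $c_0$, and let $\sum x_n$ be a series in $X$ which is not unconditionally convergent. Then the sets $E=\left\{s \in S : \left(\sum_{i=1}^n x_{s(i)}\right)_n \text{ is bounded}\right\}$ and $F=\left\{p \in P : \left(\sum_{i=1}^n x_{p(i)}\right)_n \text{ is bounded}\right\}$ are meager in $S$ and $P$, respectively.
   Context: $S=\{s\in\mathbb{N}^{\mathbb{N}} : s \text{ strictly increasing}\}$ and $P=\{p\in\mathbb{N}^{\mathbb{N}} : p \text{ a bijection of }\mathbb{N}\}$, with the subspace topology of $\mathbb{N}^{\mathbb{N}}$ (product of discrete spaces). *)

(* Defs.v *)
From HB Require Import structures.
From mathcomp Require Import all_boot all_order all_algebra.
From mathcomp Require Import all_classical all_reals all_analysis.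
Set Implicit Arguments. Unset Strict Implicit. Unset Printing Implicit Defensive.
Import Order.TTheory GRing.Theory Num.Theory.
Import numFieldNormedType.Exports.
Local Open Scope classical_set_scope.
Local Open Scope ring_scope.

Definition baire := {ptws nat -> nat}.

Definition Sset : set baire := [set s | forall i j : nat, (i < j)%N -> (s i < s j)%N].
Definition Pset : set baire := [set p | bijective p].

Definition nowhere_dense (T : topologicalType) (A : set T) : Prop :=
  (closure A)^° = set0.
Definition meager (T : topologicalType) (A : set T) : Prop :=
  exists F : (set T)^nat, (forall n, nowhere_dense (F n)) /\ A `<=` \bigcup_n F n.

Definition c0 {R : realType} : set (nat -> R) := [set u | u @ \oo --> (0 : R)].
Definition supnorm {R : realType} (u : nat -> R) : R := sup (range (fun n => `|u n|)).

(** X contains an isomorphic copy of c_0: there is a linear map T : c_0 -> X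
    which is an isomorphism onto its image (bounded and bounded below). *)
Definition contains_c0 {R : realType} (X : normedModType R) : Prop :=
  exists (T : (nat -> R) -> X) (m M : R),
    (forall (a : R) (u v : nat -> R), c0 u -> c0 v -> T (a *: u + v) = a *: T u + T v) /\
    0 < m /\ 0 < M /\
    (forall u, c0 u -> m * supnorm u <= `|T u| /\ `|T u| <= M * supnorm u).

Definition psums {R : realType} (X : normedModType R) (x : nat -> X) (f : nat -> nat) :
  nat -> X := series (fun i => x (f i)).

Definition uncond_convergent {R : realType} (X : normedModType R) (x : nat -> X) : Prop :=
  forall p : nat -> nat, bijective p -> cvg (psums x p @ \oo).

Definition bounded_seq {R : realType} (X : normedModType R) (y : nat -> X) : Prop :=
  exists M : R, forall n, `|y n| <= M.

(* Main.v *)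
Require Import Defs.
Set Warnings "-notation-overridden,-ambiguous-paths,-notation-incompatible-prefix".
From HB Require Import structures.
From mathcomp Require Import all_boot all_order all_algebra.
From mathcomp Require Import all_classical all_reals all_analysis.
From mathcomp Require Import lra.
Import Order.TTheory GRing.Theory Num.Theory.
Import numFieldNormedType.Exports.
Local Open Scope classical_set_scope.
Local Open Scope ring_scope.
Section HBsec.
Variables (R : realType) (X : normedModType R).

Definition hgood (z : X) (G : set (X * R)) :=
  [/\ (forall p q, G p -> G q -> G (p.1 + q.1, p.2 + q.2)),
      (forall a p, G p -> G (a *: p.1, a * p.2)),
      (forall p, G p -> p.2 <= `|p.1|) &
      (G = set0 \/ G (z, `|z|))].

Lemma hgood_fun z G x r s : hgood z G -> G (x, r) -> G (x, s) -> r = s.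
Proof.
case=> Gadd Gsc Gb _ Gr Gs.
have H1 := Gb _ (Gadd _ _ Gr (Gsc (-1) _ Gs)).
have H2 := Gb _ (Gadd _ _ Gs (Gsc (-1) _ Gr)).
move: H1 H2 => /=; rewrite scaleN1r subrr normr0 !mulN1r !subr_le0 => H1 H2.
by apply/eqP; rewrite eq_le H1 H2.
Qed.

Lemma hahn_banach_norming (z : X) : exists g : X -> R,
  [/\ (forall a u v, g (a *: u + v) = a * g u + g v),
      (forall y, `|g y| <= `|y|) & g z = `|z|].
Proof.
have [A [gA Amax]] : exists A, hgood z A /\ forall B, A `<` B -> ~ hgood z B.
  apply: Zorn_bigcup => F FP Ftot; split.
  - move=> p q [A FA Ap] [B FB Bq].
    have [AB|BA] := Ftot _ _ FA FB.
      by exists B => //; case: (FP _ FB) => + _ _ _; apply => //; exact: AB.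
    by exists A => //; case: (FP _ FA) => + _ _ _; apply => //; exact: BA.
  - by move=> a p [A FA Ap]; exists A => //; case: (FP _ FA) => _ + _ _; apply.
  - by move=> p [A FA Ap]; case: (FP _ FA) => _ _ + _; apply.
  - have [[A FA Az]|] := pselect (exists2 A, F A & A (z, `|z|)).
      by right; exists A.
    move=> nA; left; apply/seteqP; split => // p [A FA Ap].
    case: (FP _ FA) => _ _ _ [A0|Az]; first by rewrite A0 in Ap.
    by exfalso; apply: nA; exists A.
have Az : A (z, `|z|).
  case: (gA) => _ _ _ [A0|//]; exfalso.
  apply: (Amax [set p | exists a, p = (a *: z, a * `|z|)]).
    rewrite A0; split => // /(_ (z, `|z|)); apply.
    by exists 1; rewrite scale1r mul1r.
  split.
  - by move=> p q [a ->] [b ->]; exists (a + b); rewrite /= scalerDl mulrDl.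
  - by move=> c p [a ->]; exists (c * a); rewrite /= scalerA mulrA.
  - by move=> p [a ->] /=; rewrite normrZ ler_wpM2r // real_ler_norm // num_real.
  - by right; exists 1; rewrite scale1r mul1r.
case: (gA) => Aadd Asc Ab _.
have A0 : A (0, 0) by have := Asc 0 _ Az; rewrite /= scale0r mul0r.
have Atot : forall y, exists r, A (y, r).
  move=> y; apply/not_existsP => nAy.
  pose L := [set p.2 - `|p.1 - y| | p in A].
  have ubL : forall p', A p' -> ubound L (`|p'.1 + y| - p'.2).
    move=> p' Ap' _ [p Ap <-].
    have H1 := Ab _ (Aadd _ _ Ap Ap'); rewrite /= in H1.
    have H2 : `|p.1 + p'.1| <= `|p.1 - y| + `|p'.1 + y|.
      rewrite (_ : p.1 + p'.1 = (p.1 - y) + (p'.1 + y)); first exact: ler_normD.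
      by rewrite addrACA addNr addr0.
    lra.
  have L0 : L !=set0 by exists (`|z| - `|z - y|), (z, `|z|).
  have hL : has_ubound L by exists (`|z + y| - `|z|); exact: (ubL (z, `|z|)).
  pose c := sup L.
  have cle : forall p', A p' -> c <= `|p'.1 + y| - p'.2.
    by move=> p' Ap'; apply: ge_sup => //; exact: ubL.
  have cge : forall p, A p -> p.2 - `|p.1 - y| <= c.
    by move=> p Ap; apply: ub_le_sup => //; exists p.
  apply: (Amax [set q | exists p t, A p /\ q = (p.1 + t *: y, p.2 + t * c)]).
    split.
      by move=> p Ap; exists p, 0; rewrite scale0r mul0r !addr0; case: p Ap.
    move=> /(_ (y, c)) Ayc; apply: (nAy c); apply: Ayc.
    by exists (0, 0), 1; rewrite /= scale1r mul1r !add0r.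
  split.
  - move=> _ _ [p [t [Ap ->]]] [q [s [Aq ->]]].
    exists (p.1 + q.1, p.2 + q.2), (t + s); split; first exact: Aadd.
    rewrite /= scalerDl mulrDl; congr (_, _); exact: addrACA.
  - move=> a _ [p [t [Ap ->]]]; exists (a *: p.1, a * p.2), (a * t); split.
      exact: Asc.
    by rewrite /= scalerDr scalerA mulrDr mulrA.
  - move=> _ [p [t [Ap ->]]] /=.
    have [t0|tneq0] := eqVneq t 0.
      by rewrite t0 scale0r mul0r !addr0; exact: Ab.
    have [tpos|tneg] := ltP 0 t.
      have := cle _ (Asc t^-1 _ Ap); rewrite /=.
      have -> : t^-1 *: p.1 + y = t^-1 *: (p.1 + t *: y).
        by rewrite scalerDr scalerA mulVf // scale1r.
      rewrite normrZ gtr0_norm ?invr_gt0 // => H.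
      have H' : t * c <= t * (t^-1 * `|p.1 + t *: y| - t^-1 * p.2).
        by rewrite ler_pM2l.
      rewrite mulrBr !mulrA mulfV // !mul1r in H'; lra.
    have sp : 0 < - t by rewrite oppr_gt0 lt_neqAle tneq0 tneg.
    have sneq0 : - t != 0 by rewrite oppr_eq0.
    have := cge _ (Asc (- t)^-1 _ Ap); rewrite /=.
    have -> : (- t)^-1 *: p.1 - y = (- t)^-1 *: (p.1 + t *: y).
      by rewrite scalerDr scalerA invrN mulNr mulVf // scaleN1r.
    rewrite normrZ gtr0_norm ?invr_gt0 // => H.
    have H' : (- t) * ((- t)^-1 * p.2 - (- t)^-1 * `|p.1 + t *: y|) <= (- t) * c.
      by rewrite ler_pM2l.
    rewrite mulrBr !mulrA mulfV // !mul1r in H'; lra.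
  - by right; exists (z, `|z|), 0; rewrite scale0r mul0r !addr0.
have [g Ag] : exists g : X -> R, forall y, A (y, g y).
  by case: (@choice _ _ (fun y r => A (y, r)) Atot) => g Hg; exists g.
exists g; split.
- move=> a u v; apply: (@hgood_fun z A (a *: u + v) _ _ gA (Ag (a *: u + v))).
  exact: (Aadd _ _ (Asc a _ (Ag u)) (Ag v)).
- move=> y; rewrite ler_norml; apply/andP; split; last exact: (Ab _ (Ag y)).
  have := Ab _ (Asc (-1) _ (Ag y)); rewrite /= scaleN1r normrN mulN1r.
  by rewrite lerNl.
- exact: (@hgood_fun z A z _ _ gA (Ag z) Az).
Qed.

End HBsec.
Section Select.
Variable R : realType.

Definition infinite_nat (P : nat -> Prop) := forall N, exists i, (N <= i)%N /\ P i.

Lemma archi_mul (C d : R) : 0 < d -> exists r : nat, C < r%:R * d.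
Proof.
move=> d0; have x0 : 0 <= `|C| / d by rewrite divr_ge0 // ltW.
exists (Num.bound (`|C| / d)); have := archi_boundP x0.
rewrite ltr_pdivrMr // => H; apply: le_lt_trans H; exact: ler_norm.
Qed.

Lemma many_elems (Q : nat -> Prop) : infinite_nat Q ->
  forall r, exists s : seq nat, [/\ uniq s, size s = r & forall t, t \in s -> Q t].
Proof.
move=> hQ r.
suff [s [B [us ss Hs]]] : exists s B, [/\ uniq s, size s = r &
    forall t, t \in s -> Q t /\ (t < B)%N].
  by exists s; split => // t /Hs [].
elim: r => [|r [s [B [us ss Hs]]]]; first by exists [::], 0%N.
have [i [Bi Qi]] := hQ B.
exists (i :: s), i.+1; split => //=.
- rewrite us andbT; apply/negP => /Hs [_]; rewrite ltnNge Bi //.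
- by rewrite ss.
- move=> t; rewrite in_cons => /orP [/eqP ->|/Hs [Qt tB]]; first by split.
  by split => //; apply: (leq_trans tB); apply: (leq_trans Bi).
Qed.
Arguments many_elems {Q}.


Lemma sum_ge_size (f : nat -> R) (d : R) (s : seq nat) :
  (forall t, t \in s -> d <= f t) -> (size s)%:R * d <= \sum_(t <- s) f t.
Proof.
elim: s => [|a s IH] H; first by rewrite big_nil mul0r.
rewrite big_cons /= -addn1 natrD mulrDl mul1r.
have h1 := H a (mem_head _ _).
have h2 := IH (fun t ts => H t (introT orP (or_intror ts))).
lra.
Qed.
Arguments sum_ge_size {f d s}.


Lemma row_tail (f : nat -> R) (C d : R) :
  (forall s : seq nat, uniq s -> \sum_(t <- s) f t <= C) -> 0 < d ->
  exists N, forall i, (N <= i)%N -> f i <= d.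
Proof.
move=> hb d0; apply: contrapT => /forallNP nN.
have hQ : infinite_nat (fun i => d < f i).
  move=> N; have /existsNP [i /not_implyP [Ni fi]] := nN N.
  by exists i; split => //; rewrite ltNge; apply/negP.
have [r Cr] := archi_mul C d d0.
have [s [us ss Hs]] := many_elems hQ r.
have := sum_ge_size (fun t ts => ltW (Hs t ts)).
rewrite ss => H; have := hb s us; lra.
Qed.
Arguments row_tail {f C d}.


Lemma rows_tail (h : nat -> nat) (M : nat -> nat -> R) (C d : R) :
  (forall k (s : seq nat), uniq s -> \sum_(t <- s) M k t <= C) -> 0 < d ->
  forall m, exists N, forall j i, (j < m)%N -> (N <= i)%N -> M (h j) i <= d.
Proof.
move=> hb d0; elim=> [|m [N HN]]; first by exists 0%N.
have [N' HN'] := row_tail (hb (h m)) d0.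
exists (maxn N N') => j i; rewrite ltnS leq_eqVlt => /orP [/eqP ->|jm] Ni.
  by apply: HN'; apply: leq_trans Ni; exact: leq_maxr.
by apply: HN => //; apply: leq_trans Ni; exact: leq_maxl.
Qed.
Arguments rows_tail h {M C d}.


Lemma column_pigeon (M : nat -> nat -> R) (C d : R) (I : nat -> Prop) :
  (forall k (s : seq nat), uniq s -> \sum_(t <- s) M k t <= C) -> 0 < d ->
  infinite_nat I ->
  exists v, I v /\ infinite_nat (fun i => I i /\ M i v <= d).
Proof.
move=> hb d0 hI; apply: contrapT => /forallNP nv.
have nv' : forall v, I v -> exists N, forall i, (N <= i)%N -> I i -> d < M i v.
  move=> v Iv; have /not_andP [//|] := nv v.
  move=> /existsNP [N HN]; exists N => i Ni Ii.
  rewrite ltNge; apply/negP => Miv; apply: HN; exists i; split => //.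
have [r Cr] := archi_mul C d d0.
have [s [us ss Hs]] := many_elems hI r.
have [N HN] : exists N, forall t i, t \in s -> (N <= i)%N -> I i -> d < M i t.
  elim: (s) Hs => [|a s' IH] Hs'; first by exists 0%N.
  have [N1 H1] := IH (fun t ts => Hs' t (introT orP (or_intror ts))).
  have [N2 H2] := nv' a (Hs' a (mem_head _ _)).
  exists (maxn N1 N2) => t i; rewrite in_cons => /orP [/eqP ->|ts] Ni Ii.
    by apply: H2 => //; apply: leq_trans Ni; exact: leq_maxr.
  by apply: H1 => //; apply: leq_trans Ni; exact: leq_maxl.
have [i [Ni Ii]] := hI N.
have := sum_ge_size (fun t ts => ltW (HN t i ts Ni Ii)).
rewrite ss => H; have := hb i s us; lra.
Qed.
Arguments column_pigeon {M C d I}.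


Variables (M : nat -> nat -> R) (C : R) (d : nat -> R).
Hypothesis hb : forall k (s : seq nat), uniq s -> \sum_(t <- s) M k t <= C.
Hypothesis d0 : forall j, 0 < d j.

Definition Iset k (l : nat -> nat) := fun i =>
  forall j, (j < k)%N -> [/\ (l j < i)%N, M i (l j) <= d j & M (l j) i <= d k].

Definition Inv k l := infinite_nat (Iset k l).

Definition upd (l : nat -> nat) k v := fun j => if j == k then v else l j.

Lemma Inv0 l : Inv 0 l.
Proof. by move=> N; exists N; split => // j. Qed.

Lemma Inv_step k l : Inv k l -> exists v, Iset k l v /\ Inv k.+1 (upd l k v).
Proof.
move=> hI; have [v [Iv Av]] := column_pigeon hb (d0 k) hI.
exists v; split => //.
have [N HN] := rows_tail (upd l k v) hb (d0 k.+1) k.+1.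
move=> N'; have [i [Ni [Ii Miv]]] := Av (maxn N' (maxn N v.+1)).
exists i; split; first by apply: leq_trans Ni; exact: leq_maxl.
have iN : (N <= i)%N by apply: leq_trans Ni; rewrite leq_max leq_max leqnn orbT.
have vi : (v < i)%N by apply: leq_trans Ni; rewrite leq_max leq_max leqnn !orbT.
move=> j jk; have := HN j i jk iN; rewrite /upd.
case: eqP => [->|/eqP jnk] Mji; first by split.
have jk' : (j < k)%N by rewrite ltn_neqAle jnk -ltnS.
by have [a b _] := Ii j jk'; split.
Qed.


Arguments Inv_step {k l}.

Fixpoint build n : {l : nat -> nat | Inv n l} :=
  if n is n'.+1 then
    let b := build n' in
    let c := cid (Inv_step (svalP b)) in
    exist _ (upd (sval b) n' (sval c)) (proj2 (svalP c))
  else exist _ (fun _ => 0%N) (Inv0 _).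

Definition vsel n := sval (cid (Inv_step (svalP (build n)))).

Lemma build_vsel n j : (j < n)%N -> sval (build n) j = vsel j.
Proof.
elim: n => [//|n IH] jn /=; rewrite /upd.
case: eqP => [-> //|/eqP jnn]; apply: IH.
by rewrite ltn_neqAle jnn -ltnS.
Qed.

Lemma vsel_in n : Iset n (sval (build n)) (vsel n).
Proof. exact: (proj1 (svalP (cid (Inv_step (svalP (build n)))))). Qed.

Lemma select_seq : exists l : nat -> nat,
  (forall i j, (i < j)%N -> (l i < l j)%N) /\
  (forall k j, k != j -> M (l k) (l j) <= d j).
Proof.
exists vsel; split.
  move=> i j ij; have [+ _ _] := vsel_in j i ij.
  by rewrite build_vsel.
move=> k j; rewrite neq_ltn => /orP [kj|jk].
  by have [_ _] := vsel_in j k kj; rewrite build_vsel.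
by have [_ + _] := vsel_in k j jk; rewrite build_vsel.
Qed.

End Select.
Section Key.
Variables (R : realType) (X : completeNormedModType R).

Definition lfun (g : X -> R) :=
  (forall a u v, g (a *: u + v) = a * g u + g v) /\ (forall y, `|g y| <= `|y|).

Lemma lfun0 g : lfun g -> g 0 = 0.
Proof. rewrite /lfun => -[_ hb]; apply/eqP; rewrite -normr_le0 -(normr0 X); exact: hb. Qed.

Lemma lfunD g : lfun g -> forall u v, g (u + v) = g u + g v.
Proof. by rewrite /lfun => -[hl _] u v; have := hl 1 u v; rewrite scale1r mul1r. Qed.

Lemma lfunZ g : lfun g -> forall a u, g (a *: u) = a * g u.
Proof.
move=> hg a u; have := (proj1 hg) a u 0; rewrite addr0 => ->.
by rewrite lfun0 // addr0.
Qed.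

Lemma lfun_sum g (I : Type) (s : seq I) (P : pred I) (F : I -> X) : lfun g ->
  g (\sum_(t <- s | P t) F t) = \sum_(t <- s | P t) g (F t).
Proof.
move=> hg; elim: s => [|a s IH]; first by rewrite !big_nil lfun0.
rewrite !big_cons; case: (P a) => //; by rewrite lfunD // IH.
Qed.

Lemma row_bound (u : nat -> X) (K : R) g : lfun g ->
  (forall s : seq nat, uniq s -> `|\sum_(t <- s) u t| <= K) ->
  forall s : seq nat, uniq s -> \sum_(t <- s) `|g (u t)| <= K + K.
Proof.
move=> hg hK s us.
rewrite (bigID (fun t => 0 <= g (u t))) /=.
have -> : \sum_(t <- s | 0 <= g (u t)) `|g (u t)| =
          g (\sum_(t <- s | 0 <= g (u t)) u t).
  by rewrite lfun_sum //; apply: eq_bigr => t ht; rewrite ger0_norm.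
have -> : \sum_(t <- s | ~~ (0 <= g (u t))) `|g (u t)| =
          - g (\sum_(t <- s | ~~ (0 <= g (u t))) u t).
  rewrite lfun_sum // -sumrN; apply: eq_bigr => t ht; rewrite ltr0_norm //.
  by rewrite ltNge.
have hgy : forall y, g y <= `|y| /\ - g y <= `|y|.
  by move=> y; have := (proj2 hg) y; rewrite ler_norml => /andP [h1 h2]; split; lra.
apply: lerD.
  apply: le_trans (proj1 (hgy _)) _.
  by rewrite -big_filter; apply: hK; exact: filter_uniq.
apply: le_trans (proj2 (hgy _)) _.
by rewrite -big_filter; apply: hK; exact: filter_uniq.
Qed.

Arguments row_bound {u K g}.

Lemma up_est (w : nat -> X) (K : R) (a : nat -> R) (A : R) (s : seq nat) :
  (forall s : seq nat, uniq s -> `|\sum_(t <- s) w t| <= K) -> 0 <= A ->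
  uniq s -> (forall j, j \in s -> `|a j| <= A) ->
  `|\sum_(j <- s) a j *: w j| <= (K + K) * A.
Proof.
move=> hK A0 us ha.
have [g [hl hb gz]] := @hahn_banach_norming R X (\sum_(j <- s) a j *: w j).
have hg : lfun g by [].
rewrite -gz lfun_sum //.
apply: (@le_trans _ _ (\sum_(j <- s) A * `|g (w j)|)).
  rewrite big_seq_cond [X in _ <= X]big_seq_cond; apply: ler_sum => j /andP [js _].
  rewrite lfunZ //; apply: le_trans (ler_norm _) _; rewrite normrM.
  by apply: ler_wpM2r => //; exact: ha.
rewrite -mulr_sumr [X in _ <= X]mulrC; apply: ler_wpM2l => //.
exact: (@row_bound w K g hg hK s us).
Qed.

Arguments up_est {w K a A s}.

Lemma geo_sum n : \sum_(0 <= j < n) (2^-1 : R) ^+ j.+1 = 1 - 2^-1 ^+ n.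
Proof.
elim: n => [|n IH]; first by rewrite big_geq // expr0 subrr.
rewrite big_nat_recr //= IH exprS.
set y := (2^-1 : R) ^+ n.
rewrite [in LHS](splitr y) (mulrC _ y); lra.
Qed.



Lemma lfun_sumT (g : X -> R) (s : seq nat) (F : nat -> X) : lfun g ->
  g (\sum_(t <- s) F t) = \sum_(t <- s) g (F t).
Proof.
move=> hg; elim: s => [|a s IH]; first by rewrite !big_nil lfun0.
by rewrite !big_cons lfunD // IH.
Qed.

Lemma key_c0 (u : nat -> X) (e K : R) : 0 < e -> (forall k, e <= `|u k|) ->
  (forall s : seq nat, uniq s -> `|\sum_(t <- s) u t| <= K) -> contains_c0 X.
Proof.
move=> e0 hu hK.
have [G HG] : exists G : nat -> X -> R, forall k, lfun (G k) /\ G k (u k) = `|u k|.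
  have H : forall k, exists g : X -> R, lfun g /\ g (u k) = `|u k|.
    by move=> k; have [g [h1 h2 h3]] := @hahn_banach_norming R X (u k); exists g.
  by case: (choice H) => G HG; exists G.
pose d j := e / 2 * (2^-1 : R) ^+ j.+1.
have d0 : forall j, 0 < d j.
  by move=> j; rewrite /d mulr_gt0 // ?divr_gt0 // exprn_gt0 // invr_gt0.
have hb : forall k (s : seq nat), uniq s -> \sum_(t <- s) `|G k (u t)| <= K + K.
  by move=> k s us; exact: (@row_bound u K (G k) (proj1 (HG k)) hK s us).
have [l [lmono lM]] := @select_seq R (fun k j => `|G k (u j)|) (K + K) d hb d0.
pose w j := u (l j).
have linj : injective l.
  move=> i j E; case: (ltngtP i j) => // ij.
    by have := lmono _ _ ij; rewrite E ltnn.
  by have := lmono _ _ ij; rewrite E ltnn.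
have hw : forall s : seq nat, uniq s -> `|\sum_(t <- s) w t| <= K.
  move=> s us; have -> : \sum_(t <- s) w t = \sum_(i <- map l s) u i.
    by rewrite big_map.
  by apply: hK; rewrite map_inj_uniq.
have dsum : forall n, \sum_(0 <= j < n) d j <= e / 2.
  move=> n; rewrite /d -mulr_sumr geo_sum; apply: ler_piMr.
    by rewrite divr_ge0 // ltW.
  have : 0 <= (2^-1 : R) ^+ n by rewrite exprn_ge0 // invr_ge0.
  lra.
have Kp : 0 < K + K.
  have := hK [:: 0%N] isT; rewrite big_seq1 => h; have := hu 0%N; lra.
have low : forall (a : nat -> R) (A : R) n k, (forall j, `|a j| <= A) -> (k < n)%N ->
    `|a k| * e - A * (e / 2) <= `|\sum_(0 <= j < n) a j *: w j|.
  move=> a A n k ha kn.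
  have A0 : 0 <= A := le_trans (normr_ge0 _) (ha 0%N).
  have hg := proj1 (HG (l k)).
  set z := \sum_(0 <= j < n) a j *: w j.
  apply: le_trans (proj2 hg z).
  have kin : k \in index_iota 0 n by rewrite mem_index_iota.
  have Ez : G (l k) z = a k * `|w k| +
      \sum_(0 <= j < n | j != k) a j * G (l k) (w j).
    rewrite /z lfun_sumT //.
    rewrite (bigD1_seq k) //= ?iota_uniq //; congr (_ + _).
      by rewrite lfunZ // (proj2 (HG (l k))).
    by apply: eq_bigr => j _; rewrite lfunZ.
  rewrite Ez.
  have h1 : `|a k| * e <= `|a k * `|w k| |.
    by rewrite normrM normr_id; apply: ler_wpM2l => //; exact: hu.
  have h2 : `|\sum_(0 <= j < n | j != k) a j * G (l k) (w j)| <= A * (e / 2).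
    apply: le_trans (ler_norm_sum _ _ _) _.
    apply: (@le_trans _ _ (\sum_(0 <= j < n | j != k) A * d j)).
      apply: ler_sum => j jk; rewrite normrM; apply: ler_pM => //.
      by apply: lM; rewrite eq_sym.
    rewrite -mulr_sumr; apply: ler_wpM2l => //.
    apply: le_trans (dsum n).
    rewrite [X in _ <= X](bigD1_seq k) //= ?iota_uniq //.
    have := d0 k; lra.
  set x1 := a k * `|w k|.
  set y1 := \sum_(0 <= j < n | j != k) a j * G (l k) (w j).
  have h3 : `|x1| <= `|x1 + y1| + `|y1|.
    by have := ler_normD (x1 + y1) (- y1); rewrite addrK normrN.
  lra.
pose Tf (a : nat -> R) := lim (series (fun j => a j *: w j) @ \oo).
have cvgT : forall a, c0 a -> cvg (series (fun j => a j *: w j) @ \oo).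
  move=> a ha; apply/cauchy_cvgP/cauchy_seriesP => r r0.
  pose q := r / (2 * (K + K)).
  have q0 : 0 < q by rewrite /q divr_gt0 // mulr_gt0.
  have [N _ HN] : \forall t \near \oo, `|a t| < q by exact: cvgr0_norm_lt.
  exists ([set m | (N <= m)%N], [set m | (N <= m)%N]); first by split; exists N.
  case=> m1 m2 /= [Nm1 Nm2].
  apply: le_lt_trans (up_est hw (ltW q0) (iota_uniq _ _) _) _.
    move=> j; rewrite mem_index_iota => /andP [m1j _].
    by apply: ltW; apply: HN; rewrite /= (leq_trans Nm1 m1j).
  have -> : (K + K) * q = r / 2.
    have h : (K + K) * (2 * (K + K))^-1 = 2^-1.
      by rewrite invfM mulrCA mulfV ?gt_eqF // mulr1.
    by rewrite /q mulrCA h.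
  lra.
exists Tf, (e / 2), (K + K); split.
- move=> c a b ha hb'; rewrite /Tf.
  have -> : series (fun j => (c *: a + b) j *: w j) =
      c *: series (fun j => a j *: w j) + series (fun j => b j *: w j).
    apply/funext => n /=; rewrite /series /=.
    transitivity (c *: (\sum_(0 <= k < n) a k *: w k) + \sum_(0 <= k < n) b k *: w k);
      last by [].
    rewrite scaler_sumr -big_split /=.
    by apply: eq_bigr => j _; rewrite scalerA -scalerDl.
  rewrite limD; first by rewrite limZl_tmp //; exact: cvgT.
    by apply: is_cvgZl_tmp; exact: cvgT.
  exact: cvgT.
split; first by rewrite divr_gt0.
split => // a ha.
have hub : has_ubound (range (fun n => `|a n|)).
  apply/bounded_fun_has_ubound/cvg_seq_bounded/cvg_ex; exists 0.
  by rewrite -(normr0 R); apply: cvg_norm.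
set A := supnorm a.
have haA : forall j, `|a j| <= A by move=> j; apply: ub_le_sup => //; exists j.
have A0 : 0 <= A := le_trans (normr_ge0 _) (haA 0%N).
have cvn : (fun n => `|series (fun j => a j *: w j) n|) @ \oo --> `|Tf a|.
  exact: cvg_norm (cvgT a ha).
split.
  have hk : forall k, `|a k| * e - A * (e / 2) <= `|Tf a|.
    move=> k; apply: (cvgr_to_ge cvn); exists k.+1 => // n /= kn.
    by rewrite seriesEnat /=; apply: low.
  have : A <= (`|Tf a| + A * (e / 2)) / e.
    apply: ge_sup; first by exists `|a 0%N|, 0%N.
    move=> _ [k _ <-]; rewrite ler_pdivlMr //; have := hk k; lra.
  rewrite ler_pdivlMr // => h; nra.
apply: (cvgr_to_le cvn); exists 0%N => // n _.
rewrite seriesEnat /=; apply: up_est => //; first exact: iota_uniq.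
Qed.

End Key.
Section MainUC.
Variables (R : realType) (X : completeNormedModType R).

Lemma main_uc (x : nat -> X) (N : nat) (K : R) : ~ contains_c0 X ->
  (forall F : seq nat, uniq F -> (forall j, j \in F -> (N <= j)%N) ->
     `|\sum_(j <- F) x j| <= K) -> uncond_convergent x.
Proof.
move=> nc hF p [q pq qp]; apply: contrapT => ncvg.
have ncau : ~ cauchy (series (fun i => x (p i)) @ \oo).
  by move=> /cauchy_cvgP; apply: ncvg.
move: ncau; rewrite cauchy_seriesP => /existsNP [e /not_implyP [e0 nnear]].
have hab : forall m, exists ab : nat * nat, [/\ (m <= ab.1)%N, (m <= ab.2)%N &
    e <= `|\sum_(ab.1 <= k < ab.2) x (p k)|].
  move=> m; apply: contrapT => /forallNP nab; apply: nnear.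
  exists ([set k | (m <= k)%N], [set k | (m <= k)%N]); first by split; exists m.
  case=> a b /= [ma mb]; have := nab (a, b); rewrite /= => /not_and3P.
  by case=> // /negP; rewrite -ltNge.
have [f hf] := choice hab.
pose A0 := (\max_(y < N) q y).+1.
have hA0 : forall i, (A0 <= i)%N -> (N <= p i)%N.
  move=> i Ai; rewrite leqNgt; apply/negP => piN.
  have := @leq_bigmax _ (fun y : 'I_N => q y) (Ordinal piN); rewrite /= pq => h.
  by have := leq_trans Ai h; rewrite /A0 ltnn.
pose fix m k := if k is k'.+1 then maxn (f (m k')).1 (f (m k')).2 else A0.
have mS : forall k, (m k <= m k.+1)%N.
  move=> k /=; have [h1 _ _] := hf (m k); apply: leq_trans h1 _; exact: leq_maxl.
have mmono : {homo m : i j / (i <= j)%N}.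
  exact: (@homo_leq nat m (fun a b => (a <= b)%N) leqnn
            (fun y x z => @leq_trans y x z) mS).
pose blk k := map p (index_iota (f (m k)).1 (f (m k)).2).
have blkP : forall k j, j \in blk k -> exists i, j = p i /\ (m k <= i < m k.+1)%N.
  move=> k j /mapP [i]; rewrite mem_index_iota => /andP [h1 h2] ->; exists i.
  split => //; have [g1 _ _] := hf (m k); rewrite (leq_trans g1 h1) /=.
  by apply: (leq_trans h2); exact: leq_maxr.
pose u k := \sum_(j <- blk k) x j.
have hu : forall k, e <= `|u k|.
  by move=> k; rewrite /u big_map; have [_ _ ] := hf (m k).
have pinj : injective p := can_inj pq.
apply: nc; apply: (@key_c0 R X u e K e0 hu) => s us.
have -> : \sum_(t <- s) u t = \sum_(j <- flatten (map blk s)) x j.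
  by rewrite big_flatten big_map.
apply: hF.
  elim: s us => [//|t s IH] /= /andP [ts us].
  rewrite cat_uniq IH // andbT; apply/andP; split.
    by rewrite map_inj_uniq // iota_uniq.
  apply/hasPn => j /flattenP [r /mapP [t' t's ->]] jt'.
  apply/negP => jt.
  have [i [ji hi]] := blkP _ _ jt; have [i' [ji' hi']] := blkP _ _ jt'.
  have ii' : i = i' by apply: pinj; rewrite -ji -ji'.
  subst i'; have tt' : t != t' by apply/negP => /eqP tt; move: ts; rewrite tt t's.
  case/andP: hi => hi1 hi2; case/andP: hi' => hi1' hi2'.
  move: tt'; rewrite neq_ltn => /orP [tt|tt].
    have := mmono _ _ tt; move=> h; have := leq_trans h hi1'.
    by rewrite leqNgt hi2.
  have := mmono _ _ tt; move=> h; have := leq_trans h hi1.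
  by rewrite leqNgt hi2'.
move=> j /flattenP [r /mapP [t _ ->]] jt.
have [i [-> /andP [hi _]]] := blkP _ _ jt; apply: hA0.
by apply: leq_trans hi; exact: (mmono 0%N).
Qed.

End MainUC.
Lemma cyl_nbhs (f : baire) n :
  nbhs f [set g : baire | forall i, (i < n)%N -> g i = f i].
Proof.
elim: n => [|n IH]; first by apply: filterS filterT => g _ i.
have h : nbhs f [set g : baire | g n = f n].
  have := @proj_continuous nat (fun _ => nat) n f.
  by move/(_ [set k | k = f n]); apply.
apply: filterS (filterI IH h) => g [h1 h2] i; rewrite ltnS leq_eqVlt.
by case/orP => [/eqP -> //|]; exact: h1.
Qed.

Lemma nbhs_cyl (f : baire) (U : set baire) : nbhs f U ->
  exists n, forall g : baire, (forall i, (i < n)%N -> g i = f i) -> U g.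
Proof.
move=> Uf; apply: contrapT => /forallNP H.
have H' : forall n, exists g : baire, (forall i, (i < n)%N -> g i = f i) /\ ~ U g.
  by move=> n; have /existsNP [g /not_implyP [h1 h2]] := H n; exists g.
have [G HG] := choice H'.
have cv : G @ \oo --> f.
  apply/(@pointwise_cvgP nat nat (G @ \oo) f _) => t A At; exists t.+1 => // n /= tn.
  by have [h _] := HG n; rewrite /= h //; exact: nbhs_singleton At.
have [N _ HN] := cv U Uf.
have [_ nU] := HG N; apply: nU; exact: (HN N (leqnn N)).
Qed.

Lemma meager_gen (R : realType) (X : normedModType R) (x : nat -> X)
  (Q : set baire) :
  (forall (f : baire) (n : nat) (M : R), Q f ->
     (forall g : baire, Q g -> (forall i, (i < n)%N -> g i = f i) ->
        forall m, `|psums x g m| <= M) -> False) ->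
  meager ([set s | Q s /\ bounded_seq (psums x s)] : set (subspace Q)).
Proof.
move=> H.
pose E (M : nat) : set (subspace Q) :=
  [set s | Q s /\ forall m, `|psums x s m| <= M%:R].
exists E; split; last first.
  move=> s [Qs [B hB]]; exists (Num.bound `|B|) => //; split => // m.
  apply: le_trans (hB m) _; apply: le_trans (ler_norm B) _.
  by apply: ltW; apply: archi_boundP; exact: normr_ge0.
move=> M; rewrite /nowhere_dense; apply/seteqP; split => // f hf; exfalso.
have fcl := nbhs_singleton hf.
have Qf : Q f.
  apply: contrapT => nQf.
  have hs : nbhs (f : subspace Q) [set f].
    by case: (nbhs_subspaceP Q f) => // _ y ->.
  by have [g [[Qg _] gf]] := fcl _ hs; apply: nQf; rewrite -gf.
move: hf; rewrite /interior; case: (nbhs_subspaceP Q f) => // _ hf.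
have [n hn] := @nbhs_cyl (f : baire) _ hf.
apply: (H f n M%:R Qf) => g Qg gf m.
have gcl : closure (E M) g := hn g gf Qg.
have hs : nbhs (g : subspace Q) [set h | forall i, (i < m)%N -> h i = g i].
  case: (nbhs_subspaceP Q g) => // _.
  by apply: filterS (cyl_nbhs g m) => h hh _.
have [h [[Qh hM] hg]] := gcl _ hs.
have -> : psums x g m = psums x h m.
  rewrite /psums /series /=; apply: eq_big_nat => i /andP [_ im].
  by rewrite hg.
exact: hM.
Qed.

Section Ext.
Variables (R : realType) (X : normedModType R) (x : nat -> X).

Lemma psums_nth (g : nat -> nat) (L : seq nat) :
  (forall k, (k < size L)%N -> g k = nth 0%N L k) ->
  psums x g (size L) = \sum_(j <- L) x j.
Proof.
move=> hg; rewrite /psums /series /= [RHS](big_nth 0%N).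
rewrite big_nat_cond [RHS]big_nat_cond.
by apply: eq_bigr => k /andP [/andP [_ kL] _]; rewrite hg.
Qed.

Lemma sum_prefix (f : nat -> nat) n (F : seq nat) :
  \sum_(j <- map f (iota 0 n) ++ F) x j = psums x f n + \sum_(j <- F) x j.
Proof. by rewrite big_cat big_map /psums /series /= /index_iota subn0. Qed.

Lemma nth_prefix (f : nat -> nat) n (F : seq nat) i : (i < n)%N ->
  nth 0%N (map f (iota 0 n) ++ F) i = f i.
Proof.
move=> ilt; rewrite nth_cat size_map size_iota ilt.
by rewrite (nth_map 0%N) ?size_iota // nth_iota.
Qed.

Lemma mem_le_sum (F : seq nat) j : j \in F -> (j <= \sum_(t <- F) t)%N.
Proof.
elim: F => [//|a F IH]; rewrite in_cons big_cons => /orP [/eqP ->|jF].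
  exact: leq_addr.
by apply: leq_trans (IH jF) _; exact: leq_addl.
Qed.

Lemma sum_bound (f g : nat -> nat) n (M : R) (F : seq nat) (L : seq nat) :
  `|psums x g (size L)| <= M -> `|psums x f n| <= M ->
  psums x g (size L) = psums x f n + \sum_(j <- F) x j ->
  `|\sum_(j <- F) x j| <= M + M.
Proof.
move=> e1 e2 E.
have -> : \sum_(j <- F) x j = psums x g (size L) - psums x f n.
  by rewrite E addrC addKr.
by apply: le_trans (ler_normB _ _) _; exact: lerD.
Qed.

Lemma S_ext (f : baire) n (M : R) : Sset f ->
  (forall g : baire, Sset g -> (forall i, (i < n)%N -> g i = f i) ->
     forall m, `|psums x g m| <= M) ->
  forall F : seq nat, uniq F -> (forall j, j \in F -> (f n <= j)%N) ->
  `|\sum_(j <- F) x j| <= M + M.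
Proof.
move=> Sf H F uF hF.
pose F' := sort leq F.
pose L := map f (iota 0 n) ++ F'.
pose B := (f n + \sum_(t <- F) t).+1.
have F'F : perm_eq F' F by rewrite (perm_sort leq F) perm_refl.
have memF' : forall j, (j \in F') = (j \in F) := perm_mem F'F.
have sL : sorted ltn L.
  rewrite (sorted_pairwise ltn_trans) pairwise_cat; apply/and3P; split.
  - apply/allrelP => a b /mapP [i]; rewrite mem_iota add0n => /andP [_ ilt] ->.
    rewrite memF' => bF; exact: leq_trans (Sf i n ilt) (hF b bF).
  - rewrite pairwise_map; apply: (@sub_pairwise _ ltn).
      by move=> i j ij; exact: Sf.
    by rewrite -(sorted_pairwise ltn_trans) iota_ltn_sorted.
  - rewrite -(sorted_pairwise ltn_trans) ltn_sorted_uniq_leq sort_uniq uF /=.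
    exact: (sort_sorted leq_total).
have hB : forall j, j \in L -> (j < B)%N.
  move=> j; rewrite mem_cat => /orP [/mapP [i]|].
    rewrite mem_iota add0n => /andP [_ ilt] ->; have h := Sf i n ilt.
    rewrite /B ltnS; exact: (@leq_trans (f n) (f i) _ (ltnW h) (leq_addr _ _)).
  rewrite memF' => jF; rewrite /B ltnS.
  by apply: leq_trans (@mem_le_sum F j jF) (leq_addl _ _).
pose g (i : nat) := if (i < size L)%N then nth 0%N L i else (B + i)%N.
have Sg : Sset g.
  move=> i j ij; rewrite /g.
  case: (ltnP j (size L)) => jL.
    rewrite (ltn_trans ij jL).
    by apply: (sorted_ltn_nth ltn_trans) => //; rewrite inE // (ltn_trans ij jL).
  case: ifP => iL.
    by apply: leq_trans (hB _ (mem_nth 0%N iL)) _; exact: leq_addr.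
  by rewrite ltn_add2l.
have gf : forall i, (i < n)%N -> g i = f i.
  move=> i ilt; rewrite /g.
  have iL : (i < size L)%N.
    by rewrite size_cat size_map size_iota (leq_trans ilt (leq_addr _ _)).
  by rewrite iL nth_prefix.
apply: (@sum_bound f g n M F L (H g Sg gf (size L)) (H f Sf (fun i _ => erefl) n)).
rewrite psums_nth; last by move=> k kL; rewrite /g kL.
by rewrite sum_prefix (perm_big _ F'F).
Qed.

End Ext.

Section Ext2.
Variables (R : realType) (X : normedModType R) (x : nat -> X).

Lemma P_ext (f : baire) n (M : R) : Pset f ->
  (forall g : baire, Pset g -> (forall i, (i < n)%N -> g i = f i) ->
     forall m, `|psums x g m| <= M) ->
  forall F : seq nat, uniq F ->
    (forall j, j \in F -> ((\max_(i < n) f i).+1 <= j)%N) ->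
  `|\sum_(j <- F) x j| <= M + M.
Proof.
move=> Pf H F uF hF.
have finj : injective f by case: Pf => h fh _; exact: can_inj fh.
pose mx := \max_(i < n) f i.
have fmx : forall i, (i < n)%N -> (f i <= mx)%N.
  by move=> i ilt; exact: (@leq_bigmax _ (fun i : 'I_n => f i) (Ordinal ilt)).
pose L := map f (iota 0 n) ++ F.
have uL : uniq L.
  rewrite cat_uniq map_inj_uniq // iota_uniq uF andbT /=.
  apply/hasPn => j jF; apply/negP => /mapP [i]; rewrite mem_iota add0n.
  move=> /andP [_ ilt] ji; have := hF j jF; rewrite ji ltnNge.
  by rewrite fmx.
pose m0 := (mx.+1 + n + \sum_(t <- F) t)%N.
have hLm : forall j, j \in L -> (j < m0)%N.
  move=> j; rewrite mem_cat => /orP [/mapP [i]|jF].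
    rewrite mem_iota add0n => /andP [_ ilt] ->.
    rewrite /m0 -addnA ltnS; apply: leq_trans (fmx i ilt) _; exact: leq_addr.
  have h' := @mem_le_sum F j jF.
  rewrite /m0 !addSn ltnS; apply: leq_trans h' _; exact: leq_addl.
pose W := L ++ [seq j <- iota 0 m0 | j \notin L].
have uW : uniq W.
  rewrite /W cat_uniq uL filter_uniq ?iota_uniq // andbT.
  by apply/hasPn => j; rewrite mem_filter => /andP [].
have memW : forall y, (y \in W) = (y < m0)%N.
  move=> y; rewrite /W mem_cat mem_filter mem_iota add0n /=.
  case yL: (y \in L) => /=; last by [].
  by rewrite (hLm y yL).
have sW : size W = m0.
  have pe : perm_eq W (iota 0 m0).
    by apply: uniq_perm => //; [exact: iota_uniq | move=> y; rewrite memW mem_iota].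
  by rewrite (perm_size pe) size_iota.
have sLW : (size L <= m0)%N by rewrite -sW /W size_cat leq_addr.
have nthW : forall k, (k < size L)%N -> nth 0%N W k = nth 0%N L k.
  by move=> k kL; rewrite nth_cat kL.
pose g (i : nat) := if (i < m0)%N then nth 0%N W i else i.
pose h (y : nat) := if (y < m0)%N then index y W else y.
have Pg : Pset g.
  exists h.
    move=> i; rewrite {1}/g; case: (ltnP i m0) => im; last first.
      by rewrite /h ltnNge im.
    have gm : (nth 0%N W i < m0)%N by rewrite -memW mem_nth // sW.
    by rewrite /h gm index_uniq // sW.
  move=> y; rewrite {1}/h; case: (ltnP y m0) => ym; last first.
    by rewrite /g ltnNge ym.
  have hm : (index y W < m0)%N by rewrite -[X in (_ < X)%N]sW index_mem memW.
  by rewrite /g hm nth_index // memW.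
have gf : forall i, (i < n)%N -> g i = f i.
  move=> i ilt.
  have iL : (i < size L)%N.
    by rewrite size_cat size_map size_iota (leq_trans ilt (leq_addr _ _)).
  by rewrite /g (leq_trans iL sLW) nthW // nth_prefix.
apply: (@sum_bound R X x f g n M F L (H g Pg gf (size L))
   (H f Pf (fun i _ => erefl) n)).
rewrite psums_nth; last first.
  by move=> k kL; rewrite /g (leq_trans kL sLW) nthW.
by rewrite sum_prefix.
Qed.

End Ext2.

Theorem mainTheorem4 (R : realType) (X : completeNormedModType R) (x : nat -> X) :
  ~ contains_c0 X -> ~ uncond_convergent x ->
  meager ([set s | Sset s /\ bounded_seq (psums x s)] : set (subspace Sset)) /\
  meager ([set p | Pset p /\ bounded_seq (psums x p)] : set (subspace Pset)).
Proof.
move=> nc nuc; split.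
  apply: meager_gen => f n M Sf H; apply: nuc.
  apply: (@main_uc R X x (f n) (M + M) nc) => F uF hF.
  exact: (@S_ext R X x f n M Sf H F uF hF).
apply: meager_gen => f n M Pf H; apply: nuc.
apply: (@main_uc R X x (\max_(i < n) f i).+1 (M + M) nc) => F uF hF.
exact: (@P_ext R X x f n M Pf H F uF hF).
Qed.
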